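(* For every integer $\alpha\ge0$, \[ W_{2\alpha+2}=\Bigl(\sum_{n\ge1}a\bigl(5^{2\alpha+2}n-\delta'_\alpha\bigr)q^n\Bigr)\prod_{n\ge1}(1-q^n)(1-q^{2n}), \] where $\delta'_\alpha=\frac{5^{2\alpha+2}-1}{8}$.
   Context: The cubic partition function $a(n)$ is defined by $\sum_{n\ge 0}a(n)q^n=\prod_{n\ge 1}\frac{1}{(1-q^n)(1-q^{2n})}$ (with $a(m)=0$ for $m<0$). Let $F=q^3\prod_{n\ge1}\frac{(1-q^{25n})(1-q^{50n})}{(1-q^n)(1-q^{2n})}$ and for a formal Laurent series $f=\sum_n c(n)q^n$ let $U(f)=\sum_n c(5n)q^n$. Define $W_1=U(F)$, and for $k\ge1$: $W_{2k}=U(W_{2k-1})$ and $W_{2k+1}=U(W_{2k}F)$. *)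

(* Defs.v *)
From HB Require Import structures.
From mathcomp Require Import all_boot all_order all_algebra.
Set Implicit Arguments. Unset Strict Implicit. Unset Printing Implicit Defensive.
Import Order.TTheory GRing.Theory Num.Theory.
Local Open Scope ring_scope.

(* A formal power series sum_{n>=0} f n q^n with integer coefficients. *)
Definition ps := nat -> int.

Definition ps1 : ps := fun n => if n == 0%N then 1 else 0.

Definition psmul (f g : ps) : ps :=
  fun n => \sum_(0 <= i < n.+1) f i * g (n - i)%N.

Definition one_minus_qk (k : nat) : ps :=
  fun n => (if n == 0%N then 1 else 0) - (if n == k then 1 else 0).

Definition inv_one_minus_qk (k : nat) : ps :=
  fun n => if (0 < k)%N && (k %| n)%N then 1 else 0.

(* Infinite product prod_{k>=1} G k, for factors with G k = 1 mod q^k: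
   the coefficient of q^n only depends on the factors with k <= n. *)
Definition infprod (G : nat -> ps) : ps :=
  fun n => (\big[psmul/ps1]_(1 <= k < n.+1) G k) n.

Definition P12 : ps := infprod (fun k => psmul (one_minus_qk k) (one_minus_qk (2 * k))).

Definition cubic_gf : ps :=
  infprod (fun k => psmul (inv_one_minus_qk k) (inv_one_minus_qk (2 * k))).

Definition a (n : nat) : int := cubic_gf n.

Definition shift3 (f : ps) : ps := fun n => if (n < 3)%N then 0 else f (n - 3)%N.

Definition F : ps :=
  shift3 (psmul
    (infprod (fun k => psmul (one_minus_qk (25 * k)) (one_minus_qk (50 * k))))
    cubic_gf).

Definition U (f : ps) : ps := fun n => f (5 * n)%N.

(* Wp i = W_{i+1}:  W_1 = U F,  W_{2k} = U(W_{2k-1}),  W_{2k+1} = U(W_{2k} F). *)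
Fixpoint Wp (i : nat) : ps :=
  match i with
  | 0%N => U F
  | i'.+1 => if odd i' then U (psmul (Wp i') F) (* index i'+2 odd *)
             else U (Wp i')                     (* index i'+2 even *)
  end.

(* W j for j >= 1 (W 0 is an irrelevant junk value) *)
Definition W (j : nat) : ps := Wp j.-1.

(* delta'_alpha = (5^(2 alpha + 2) - 1) / 8  (exact division) *)
Definition delta' (alpha : nat) : nat := ((5 ^ (2 * alpha + 2) - 1) %/ 8)%N.

(* Main.v *)
Require Import Defs.
From HB Require Import structures.
From mathcomp Require Import all_boot all_order all_algebra.
From Stdlib Require Import FunctionalExtensionality Lia.
Import GRing.Theory.
Local Open Scope ring_scope.

Lemma ps_ext (f g : ps) : (forall n, f n = g n) -> f = g.
Proof. move=> H; apply: functional_extensionality => n; exact: H. Qed.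

Lemma psmulE f g n : psmul f g n = \sum_(0 <= i < n.+1) f i * g (n - i)%N.
Proof. by []. Qed.

Definition tr (N : nat) (f : ps) : {poly int} := \poly_(i < N) f i.

Lemma psmul_tr N f g n : (n < N)%N -> psmul f g n = (tr N f * tr N g)`_n.
Proof.
move=> hn; rewrite coefM psmulE big_mkord; apply: eq_bigr => [[i /= hi]] _.
have h1 : (i < N)%N := leq_ltn_trans (hi : (i <= n)%N) hn.
have h2 : (n - i < N)%N := leq_ltn_trans (leq_subr i n) hn.
by rewrite !coef_poly h1 h2.
Qed.

Lemma coefM_eq (p p' q q' : {poly int}) n :
  (forall i, (i <= n)%N -> p`_i = p'`_i) -> (forall i, (i <= n)%N -> q`_i = q'`_i) ->
  (p * q)`_n = (p' * q')`_n.
Proof.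
move=> hp hq; rewrite !coefM; apply: eq_bigr => [[i /= hi]] _.
by rewrite hp // hq // leq_subr.
Qed.

Lemma tr_psmulE n f g i : (i <= n)%N ->
  (tr n.+1 (psmul f g))`_i = (tr n.+1 f * tr n.+1 g)`_i.
Proof. by move=> hi; rewrite coef_poly ltnS hi; apply: psmul_tr; rewrite ltnS. Qed.

Lemma psmulA : associative psmul.
Proof.
move=> f g h; apply: ps_ext => n.
have E1 : psmul f (psmul g h) n = (tr n.+1 f * tr n.+1 (psmul g h))`_n by apply: psmul_tr.
have E2 : psmul (psmul f g) h n = (tr n.+1 (psmul f g) * tr n.+1 h)`_n by apply: psmul_tr.
rewrite E1 E2.
have E3 : (tr n.+1 f * tr n.+1 (psmul g h))`_n = (tr n.+1 f * (tr n.+1 g * tr n.+1 h))`_n.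
  by apply: coefM_eq => // i hi; apply: tr_psmulE.
have E4 : (tr n.+1 (psmul f g) * tr n.+1 h)`_n = ((tr n.+1 f * tr n.+1 g) * tr n.+1 h)`_n.
  by apply: coefM_eq => // i hi; apply: tr_psmulE.
by rewrite E3 E4 mulrA.
Qed.

Lemma psmulC : commutative psmul.
Proof.
move=> f g; apply: ps_ext => n.
by rewrite (psmul_tr _ _ _ _ (ltnSn n)) (psmul_tr _ g _ _ (ltnSn n)) mulrC.
Qed.

Lemma psmul1 : left_id ps1 psmul.
Proof.
move=> f; apply: ps_ext => n.
rewrite (psmul_tr _ _ _ _ (ltnSn n)).
have -> : tr n.+1 ps1 = 1.
  apply/polyP => i; rewrite coef_poly coef1 /ps1.
  by case: (i =P 0%N) => [->|] //; case: (i < n.+1)%N.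
by rewrite mul1r coef_poly ltnSn.
Qed.

HB.instance Definition _ := Monoid.isComLaw.Build ps ps1 psmul psmulA psmulC psmul1.

Lemma psmulCA f g h : psmul f (psmul g h) = psmul g (psmul f h).
Proof. by rewrite psmulA (psmulC f g) -psmulA. Qed.

Lemma psmul1r f : psmul f ps1 = f.
Proof. by rewrite psmulC psmul1. Qed.

Lemma sum_ind (N j : nat) (h : nat -> int) :
  \sum_(0 <= i < N) (if i == j then h i else 0) = if (j < N)%N then h j else 0.
Proof.
elim: N => [|N IH]; first by rewrite big_geq.
rewrite big_nat_recr //= IH.
case: (ltngtP j N) => [hjN|hNj|->].
- by rewrite addr0 ltnS ltnW.
- by rewrite addr0 ltnS leqNgt hNj.
- by rewrite add0r ltnSn.
Qed.

Lemma psmul_omq k g n :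
  psmul (one_minus_qk k) g n = g n - (if (k <= n)%N then g (n - k)%N else 0).
Proof.
rewrite psmulE /one_minus_qk.
rewrite (eq_big_nat _ _ (F2 := fun i => (if i == 0%N then g (n - i)%N else 0)
                                   - (if i == k then g (n - i)%N else 0))); last first.
  by move=> i _; rewrite mulrBl; case: (i == 0%N); case: (i == k); rewrite ?mul1r ?mul0r.
by rewrite sumrB !sum_ind subn0.
Qed.

Lemma omq_inv k : (0 < k)%N -> psmul (one_minus_qk k) (inv_one_minus_qk k) = ps1.
Proof.
move=> hk; apply: ps_ext => n; rewrite psmul_omq /inv_one_minus_qk /ps1 hk /=.
case: n => [|n]; first by rewrite dvdn0 leqNgt hk subr0.
case: (leqP k n.+1) => hkn.
- have -> : (k %| n.+1)%N = (k %| n.+1 - k)%N by rewrite -{1}(subnK hkn) dvdn_addl.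
  by rewrite subrr.
- by rewrite gtnNdvd.
Qed.

Definition ok k (h : ps) := h 0%N = 1 /\ forall j, (0 < j < k)%N -> h j = 0.

Lemma psmul_ok f h k n : ok k h -> (n < k)%N -> psmul f h n = f n.
Proof.
move=> [h0 hj] hn; rewrite psmulE.
rewrite (eq_big_nat _ _ (F2 := fun i => if i == n then f i else 0)).
  by rewrite sum_ind ltnSn.
move=> i /andP[_ hi]; case: (eqVneq i n) => [->|hin]; first by rewrite subnn h0 mulr1.
rewrite hj ?mulr0 //; apply/andP; split.
  by rewrite subn_gt0 ltn_neqAle hin.
exact: leq_ltn_trans (leq_subr _ _) hn.
Qed.

Lemma ok_mul k g h : ok k g -> ok k h -> ok k (psmul g h).
Proof.
move=> hg hh; split.
  by rewrite psmulE big_nat1 hg.1 hh.1 mulr1.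
move=> j /andP[hj0 hjk]; rewrite (psmul_ok _ _ _ _ hh hjk); apply: hg.2; by rewrite hj0.
Qed.

Lemma ok_le k k' h : (k <= k')%N -> ok k' h -> ok k h.
Proof.
move=> hk [h0 hj]; split => // j /andP[hj0 hjk]; apply: hj.
by rewrite hj0 (leq_trans hjk hk).
Qed.

Lemma ok_omq k : (0 < k)%N -> ok k (one_minus_qk k).
Proof.
move=> hk; rewrite /ok /one_minus_qk; split.
  by rewrite eq_sym (gtn_eqF hk) subr0.
by move=> j /andP[hj0 hjk]; rewrite (gtn_eqF hj0) (ltn_eqF hjk) subr0.
Qed.

Lemma ok_inv k : (0 < k)%N -> ok k (inv_one_minus_qk k).
Proof.
move=> hk; rewrite /ok /inv_one_minus_qk hk; split; first by rewrite dvdn0.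
by move=> j /andP[hj0 hjk]; rewrite gtnNdvd.
Qed.

Lemma prod_stable (G : nat -> ps) n M :
  (forall k, (0 < k)%N -> ok k (G k)) -> (n < M)%N ->
  (\big[psmul/ps1]_(1 <= k < M) G k) n = (\big[psmul/ps1]_(1 <= k < n.+1) G k) n.
Proof.
move=> hG; elim: M => // M IH; rewrite ltnS leq_eqVlt => /orP[/eqP <- // | hnM].
have hM : (0 < M)%N by apply: leq_ltn_trans hnM.
by rewrite big_nat_recr //= (psmul_ok _ _ _ _ (hG M hM) hnM) IH.
Qed.

Lemma infprod_mul G H : (forall k, (0 < k)%N -> ok k (G k)) ->
  (forall k, (0 < k)%N -> ok k (H k)) ->
  psmul (infprod G) (infprod H) = infprod (fun k => psmul (G k) (H k)).
Proof.
move=> hG hH; apply: ps_ext => n.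
rewrite [RHS]/infprod big_split /= !psmulE.
apply: eq_big_nat => i /andP[_ hi].
rewrite /infprod (prod_stable _ _ _ hG hi).
have hi' : (n - i < n.+1)%N by rewrite ltnS leq_subr.
by rewrite (prod_stable _ _ _ hH hi').
Qed.

Lemma P12A : psmul P12 cubic_gf = ps1.
Proof.
rewrite /P12 /cubic_gf infprod_mul; last 2 first.
- move=> k hk; apply: ok_mul; first by apply: ok_omq.
  apply: (ok_le _ _ _ (leq_pmull k (isT : (0 < 2)%N))); apply: ok_omq; by rewrite muln_gt0.
- move=> k hk; apply: ok_mul; first by apply: ok_inv.
  apply: (ok_le _ _ _ (leq_pmull k (isT : (0 < 2)%N))); apply: ok_inv; by rewrite muln_gt0.
apply: ps_ext => n; rewrite /infprod.
rewrite (eq_big_nat _ _ (F2 := fun _ => ps1)); first by rewrite big1_eq.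
move=> k /andP[hk _].
have hk2 : (0 < 2 * k)%N by rewrite muln_gt0.
rewrite -psmulA (psmulCA (one_minus_qk (2 * k))) psmulA.
by rewrite omq_inv // omq_inv // psmul1.
Qed.

Definition D (d : nat) (g : ps) : ps := fun n => if (d %| n)%N then g (n %/ d)%N else 0.
Definition Ud (d : nat) (f : ps) : ps := fun n => f (d * n)%N.

Lemma D_mult d g j : (0 < d)%N -> D d g (d * j)%N = g j.
Proof. by move=> hd; rewrite /D dvdn_mulr // mulKn. Qed.

Lemma sum_mult d (h : nat -> int) m : (0 < d)%N -> (forall i, ~~ (d %| i)%N -> h i = 0) ->
  \sum_(0 <= i < d * m) h i = \sum_(0 <= j < m) h (d * j)%N.
Proof.
move=> hd hz; elim: m => [|m IH]; first by rewrite muln0 !big_geq.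
rewrite mulnSr (big_cat_nat _ (n := (d * m)%N)) ?leq_addr // IH big_nat_recr //=.
congr (_ + _).
have hlt : (d * m < d * m + d)%N by rewrite -{1}(addn0 (d * m)%N) ltn_add2l.
rewrite (big_ltn hlt) big_nat_cond big1 ?addr0 // => i /andP[/andP[hi1 hi2] _].
apply: hz; have hle : (d * m <= i)%N by apply: ltnW.
rewrite -(subnKC hle) dvdn_addr ?dvdn_mulr // gtnNdvd //.
  by rewrite subn_gt0.
by rewrite ltn_subLR.
Qed.

Lemma sum_mult' d (h : nat -> int) m : (0 < d)%N -> (forall i, ~~ (d %| i)%N -> h i = 0) ->
  \sum_(0 <= i < (d * m).+1) h i = \sum_(0 <= j < m.+1) h (d * j)%N.
Proof.
move=> hd hz; by rewrite big_nat_recr //= sum_mult // [RHS]big_nat_recr.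
Qed.

Lemma U_mul_D d f g : (0 < d)%N -> Ud d (psmul f (D d g)) = psmul (Ud d f) g.
Proof.
move=> hd; apply: ps_ext => n; rewrite /Ud psmulC psmulE (psmulC _ g) psmulE.
rewrite (sum_mult' _ (fun i => D d g i * f (d * n - i)%N)) //; last first.
  by move=> i hi; rewrite /D (negbTE hi) mul0r.
apply: eq_big_nat => j _; by rewrite D_mult // mulnBr.
Qed.

Lemma D_mul d f g : (0 < d)%N -> D d (psmul f g) = psmul (D d f) (D d g).
Proof.
move=> hd; apply: ps_ext => n.
case hdn: (d %| n)%N.
  have -> : n = (d * (n %/ d))%N by rewrite mulnC divnK.
  rewrite D_mult // !psmulE.
  rewrite (sum_mult' _ (fun i => D d f i * D d g (d * (n %/ d) - i)%N)) //; last first.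
    by move=> i hi; rewrite /D (negbTE hi) mul0r.
  by apply: eq_big_nat => j _; rewrite -mulnBr !D_mult.
rewrite /D hdn psmulE big_nat_cond big1 // => i /andP[/andP[_ hi] _].
case hdi: (d %| i)%N; last by rewrite mul0r.
case hdi': (d %| n - i)%N; last by rewrite mulr0.
move: hdn; rewrite -(subnKC (hi : (i <= n)%N)) dvdn_addr //; by rewrite hdi'.
Qed.

Lemma D_ps1 d : (0 < d)%N -> D d ps1 = ps1.
Proof.
move=> hd; apply: ps_ext => n; rewrite /D /ps1.
case: n => [|n]; first by rewrite dvdn0 div0n.
case hdn: (d %| n.+1)%N => //.
case: (eqVneq (n.+1 %/ d)%N 0%N) => // h0.
by move: (divnK hdn); rewrite h0 mul0n.
Qed.

Lemma D_omq d k : (0 < d)%N -> D d (one_minus_qk k) = one_minus_qk (d * k).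
Proof.
move=> hd; apply: ps_ext => n; rewrite /D /one_minus_qk.
have hd0 : (d == 0%N) = false by rewrite eqn0Ngt hd.
case hdn: (d %| n)%N.
  have -> : n = (d * (n %/ d))%N by rewrite mulnC divnK.
  by rewrite mulKn // muln_eq0 eqn_mul2l hd0.
have -> : (n == 0%N) = false by apply/negP => /eqP h; rewrite h dvdn0 in hdn.
have -> : (n == d * k)%N = false by apply/negP => /eqP h; rewrite h dvdn_mulr in hdn.
by rewrite subrr.
Qed.

Lemma U_U f : U (U f) = Ud 25 f.
Proof. by apply: ps_ext => n; rewrite /U /Ud mulnA. Qed.

Definition e3 : ps := fun i => if i == 3%N then 1 else 0.

Lemma shift3E f : shift3 f = psmul e3 f.
Proof.
apply: ps_ext => n; rewrite psmulE /shift3.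
rewrite (eq_big_nat _ _ (F2 := fun i => if i == 3%N then f (n - i)%N else 0)); last first.
  by move=> i _; rewrite /e3; case: (i == 3%N); rewrite ?mul1r ?mul0r.
rewrite sum_ind; have -> : (3 < n.+1)%N = ~~ (n < 3)%N by rewrite ltnS leqNgt.
by case: (n < 3)%N.
Qed.

Definition G12 k := psmul (one_minus_qk k) (one_minus_qk (2 * k)).

Lemma ok_G12 k : (0 < k)%N -> ok k (G12 k).
Proof.
move=> hk; apply: ok_mul; first by apply: ok_omq.
apply: (ok_le _ _ _ (leq_pmull k (isT : (0 < 2)%N))); apply: ok_omq; by rewrite muln_gt0.
Qed.

Lemma P25E : infprod (fun k => psmul (one_minus_qk (25 * k)) (one_minus_qk (50 * k))) = D 25 P12.
Proof.
have -> : (fun k => psmul (one_minus_qk (25 * k)) (one_minus_qk (50 * k))) = (fun k => D 25 (G12 k)).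
  apply: functional_extensionality => k.
  by rewrite /G12 D_mul // !D_omq // mulnA.
apply: ps_ext => n; rewrite /infprod.
rewrite -(big_morph (D 25) (fun f g => D_mul 25 f g (isT : (0 < 25)%N)) (D_ps1 25 (isT : (0 < 25)%N))).
rewrite /D /P12 /infprod; case: (25 %| n)%N => //.
rewrite (prod_stable _ _ _ ok_G12) //.
by rewrite ltnS leq_div.
Qed.

Definition R (al : nat) : ps :=
  fun n => if n == 0%N then 0 else a (5 ^ (2 * al + 2) * n - delta' al)%N.

Lemma step c : U (U (shift3 (psmul c (D 25 P12)))) = psmul (Ud 25 (shift3 c)) P12.
Proof. by rewrite U_U !shift3E psmulA U_mul_D. Qed.

Lemma FE : F = shift3 (psmul cubic_gf (D 25 P12)).
Proof. by rewrite /F P25E psmulC. Qed.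

Lemma arith q n : (0 < n)%N ->
  ((q * 8 + 1) * (25 * n - 3) - q = 25 * (q * 8 + 1) * n - (25 * q + 3))%N.
Proof.
move=> hn; rewrite -!multE -!plusE -!minusE; move/ltP: hn => hn; nia.
Qed.

Lemma arith2 al n : (0 < n)%N ->
  (5 ^ (2 * al + 2) * (25 * n - 3) - delta' al = 5 ^ (2 * al.+1 + 2) * n - delta' al.+1)%N.
Proof.
move=> hn.
have he : (5 ^ (2 * al + 2) %% 8 = 1)%N.
  have -> : (2 * al + 2 = 2 * al.+1)%N by rewrite mulnS addnC.
  by rewrite expnM -modnXm /= exp1n.
have hE : (5 ^ (2 * al.+1 + 2) = 25 * 5 ^ (2 * al + 2))%N.
  by rewrite mulnS -addnA expnD.
move: he; rewrite /delta' hE.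
move: (5 ^ (2 * al + 2))%N => e he.
have -> : e = ((e %/ 8) * 8 + 1)%N by rewrite {1}(divn_eq e 8) he.
move: (e %/ 8)%N => q.
rewrite addnK mulnK // arith //.
have -> : (25 * (q * 8 + 1) - 1 = (25 * q + 3) * 8)%N.
  rewrite -!multE -!plusE -!minusE; lia.
by rewrite mulnK.
Qed.

Lemma mainW al : W (2 * al + 2) = psmul (R al) P12.
Proof.
elim: al => [|al IH].
  rewrite /W /= FE step; congr psmul; apply: ps_ext => n.
  rewrite /Ud /shift3 /R; case: n => [|n] //.
  have -> : (25 * n.+1 < 3)%N = false by rewrite mulnS.
  by [].
have -> : W (2 * al.+1 + 2) = U (U (psmul (W (2 * al + 2)) F)).
  rewrite /W.
  have -> : ((2 * al.+1 + 2).-1 = (2 * al + 1).+2)%N by rewrite -!plusE -!multE /=; lia.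
  have -> : ((2 * al + 2).-1 = (2 * al + 1))%N by rewrite addn2 addn1.
  rewrite [Wp (2 * al + 1).+2]/=.
  have ho : odd (2 * al + 1) = true by rewrite oddD oddM.
  by rewrite ho.
rewrite IH FE shift3E psmulCA -shift3E.
have -> : psmul (psmul (R al) P12) (psmul cubic_gf (D 25 P12)) = psmul (R al) (D 25 P12).
  by rewrite -psmulA (psmulA P12) P12A psmul1.
rewrite step; congr psmul; apply: ps_ext => n.
rewrite /Ud /shift3 /R; case: n => [|n] //.
have -> : (25 * n.+1 < 3)%N = false by rewrite mulnS.
have -> : (25 * n.+1 - 3 == 0)%N = false by rewrite mulnS.
by rewrite arith2.
Qed.

Theorem mainTheorem8 (alpha : nat) (m : nat) :
  W (2 * alpha + 2) m =
  psmul (fun n => if n == 0%N then 0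
                  else a (5 ^ (2 * alpha + 2) * n - delta' alpha)%N)
        P12 m.
Proof. by rewrite mainW. Qed.
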